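(* Let $(w_{ij})_{i,j=1}^N$ be a nonnegative weight matrix with $w_{ii}=0$ defining a strongly connected directed graph on $N=N_{\mathrm{G}}+N_{\mathrm{R}}$ vertices, each vertex colored green or red with $N_{\mathrm{G}}$ green and $N_{\mathrm{R}}$ red vertices. Assume: (i) $w_{ij}=0$ whenever $i,j$ have the same color; (ii) every green vertex has in-degree $\sum_j w_{ji}=w^{\mathrm{in}}_{\mathrm{G}}$ and out-degree $\sum_j w_{ij}=w^{\mathrm{out}}_{\mathrm{G}}$, and every red vertex has in-degree $w^{\mathrm{in}}_{\mathrm{R}}$ and out-degree $w^{\mathrm{out}}_{\mathrm{R}}$, all positive; (iii) for every green $i$ and red $j$, $w_{ji}=\frac{w^{\mathrm{in}}_{\mathrm{G}}}{w^{\mathrm{out}}_{\mathrm{G}}}\,w_{ij}$. Let $a_{\mathrm{G}},a_{\mathrm{R}},b_{\mathrm{G}},b_{\mathrm{R}}>0$ and set $$\zeta_{\mathrm{G}}=\frac{b_{\mathrm{R}}w^{\mathrm{in}}_{\mathrm{G}}(a_{\mathrm{R}}w^{\mathrm{out}}_{\mathrm{R}}+b_{\mathrm{G}}w^{\mathrm{in}}_{\mathrm{R}})}{a_{\mathrm{R}}w^{\mathrm{out}}_{\mathrm{R}}(a_{\mathrm{G}}w^{\mathrm{out}}_{\mathrm{G}}+b_{\mathrm{R}}w^{\mathrm{in}}_{\mathrm{G}})},\qquad \zeta_{\mathrm{R}}=\frac{b_{\mathrm{G}}w^{\mathrm{in}}_{\mathrm{R}}(a_{\mathrm{G}}w^{\mathrm{out}}_{\mathrm{G}}+b_{\mathrm{R}}w^{\mathrm{in}}_{\mathrm{G}})}{a_{\mathrm{G}}w^{\mathrm{out}}_{\mathrm{G}}(a_{\mathrm{R}}w^{\mathrm{out}}_{\mathrm{R}}+b_{\mathrm{G}}w^{\mathrm{in}}_{\mathrm{R}})},$$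 and for a state $\mathbf{x}\in\{0,1\}^N$ let $\zeta_i=\zeta_{\mathrm{G}}$ if $i$ is green and $\zeta_i=\zeta_{\mathrm{R}}$ if $i$ is red. Then $\prod_i\zeta_i^{X_n(i)}$ is a martingale for the process $X_n$, and, provided $\zeta_{\mathrm{G}}^{N_{\mathrm{G}}}\zeta_{\mathrm{R}}^{N_{\mathrm{R}}}\neq1$, the fixation probability of $A$ from initial state $\mathbf{x}$ is $$\rho_A(\mathbf{x})=\frac{1-\prod_{i=1}^N\zeta_i^{x_i}}{1-\zeta_{\mathrm{G}}^{N_{\mathrm{G}}}\zeta_{\mathrm{R}}^{N_{\mathrm{R}}}}.$$ In particular the mean fixation probability of a single $A$ at a uniformly random vertex is $$\rho_A=\frac{1-\frac1N\left(N_{\mathrm{G}}\zeta_{\mathrm{G}}+N_{\mathrm{R}}\zeta_{\mathrm{R}}\right)}{1-\zeta_{\mathrm{G}}^{N_{\mathrm{G}}}\zeta_{\mathrm{R}}^{N_{\mathrm{R}}}}.$$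
   Context: States are $\mathbf{x}\in\{0,1\}^N$, with $x_i=1$ meaning vertex $i$ holds type $A$ and $x_i=0$ type $B$. The fitness of the occupant of vertex $j$ is $a_j$ if it is type $A$ and $b_j$ if type $B$, where $a_j=a_{\mathrm{G}},b_j=b_{\mathrm{G}}$ if $j$ is green and $a_j=a_{\mathrm{R}},b_j=b_{\mathrm{R}}$ if $j$ is red. Weighted Moran process: in each step, an ordered pair $(j,i)$ is chosen with probability proportional to $f_j w_{ji}$, where $f_j$ is the fitness of the occupant of $j$ (normalized by $\sum_{j,k}f_j w_{jk}$), and the occupant of $i$ is replaced by an offspring of the type of the occupant of $j$. $X_n$ denotes the state at time $n$. Fixation of $A$ means absorption in the all-ones state. *)

(* Defs.v *)
From HB Require Import structures.
From mathcomp Require Import all_boot all_order all_algebra.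
From mathcomp Require Import all_classical all_reals all_analysis.
Set Implicit Arguments.
Unset Strict Implicit.
Unset Printing Implicit Defensive.
Import Order.TTheory GRing.Theory Num.Theory.
Local Open Scope ring_scope.

(* States x in {0,1}^N : x i = true means vertex i holds type A. *)
Definition state (N : nat) := {ffun 'I_N -> bool}.

Definition all_ones (N : nat) : state N := [ffun => true].

Definition single_A (N : nat) (i : 'I_N) : state N := [ffun k => k == i].

Section Moran.
Variables (R : realType) (N : nat) (w : 'I_N -> 'I_N -> R) (green : {set 'I_N})
          (aG aR bG bR : R).

Definition fitness (x : state N) (j : 'I_N) : R :=
  if x j then (if j \in green then aG else aR)
  else (if j \in green then bG else bR).

Definition total_fitness (x : state N) : R :=
  \sum_(j < N) \sum_(k < N) fitness x j * w j k.

Definition replace (x : state N) (j i : 'I_N) : state N :=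
  [ffun k => if k == i then x j else x k].

Definition trans (x y : state N) : R :=
  \sum_(j < N) \sum_(i < N)
     (if replace x j i == y then fitness x j * w j i / total_fitness x else 0).

Fixpoint nstep (n : nat) (x y : state N) : R :=
  match n with
  | 0 => (x == y)%:R
  | n'.+1 => \sum_(z : state N) nstep n' x z * trans z y
  end.

End Moran.

(* Main.v *)
Set Warnings "-all".
Require Import Defs.
From HB Require Import structures.
From mathcomp Require Import all_boot all_order all_algebra.
From mathcomp Require Import all_classical all_reals all_analysis.
From mathcomp Require Import lra ring.
Import Order.TTheory GRing.Theory Num.Theory.
Import numFieldNormedType.Exports.
Local Open Scope ring_scope.
Lemma sum_ge_term {R : realType} {I : finType} (F : I -> R) (i0 : I) :
  (forall i, 0 <= F i) -> F i0 <= \sum_i F i.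
Proof. move=> h; rewrite (bigD1 i0) //= lerDl sumr_ge0 //. Qed.

Lemma fitness_gt0 {R : realType} {N : nat} (green : {set 'I_N}) (aG aR bG bR : R) x j :
  0 < aG -> 0 < aR -> 0 < bG -> 0 < bR -> 0 < fitness green aG aR bG bR x j.
Proof. by move=> *; rewrite /fitness; do 2 case: ifP. Qed.

Lemma total_gt0 {R : realType} {N : nat} (w : 'I_N -> 'I_N -> R) (green : {set 'I_N}) (aG aR bG bR : R) x j0 k0 :
  0 < aG -> 0 < aR -> 0 < bG -> 0 < bR -> (forall i j, 0 <= w i j) -> 0 < w j0 k0 ->
  0 < total_fitness w green aG aR bG bR x.
Proof.
move=> ha hb hc hd hw hp.
have hf j := fitness_gt0 green aG aR bG bR x j ha hb hc hd.
apply: (lt_le_trans _ (sum_ge_term _ j0 _)); last first.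
  by move=> j; apply: sumr_ge0 => k _; rewrite mulr_ge0 // ltW.
apply: (lt_le_trans _ (sum_ge_term _ k0 _)); last by move=> k; rewrite mulr_ge0 // ltW.
by rewrite mulr_gt0.
Qed.

Lemma trans_sum {R : realType} {N : nat} (w : 'I_N -> 'I_N -> R) (green : {set 'I_N}) (aG aR bG bR : R) x
   (g : state N -> R) :
  \sum_y trans w green aG aR bG bR x y * g y =
  (\sum_j \sum_i fitness green aG aR bG bR x j * w j i * g (replace x j i))
     / total_fitness w green aG aR bG bR x.
Proof.
rewrite /trans mulr_suml.
under eq_bigr do rewrite mulr_suml.
rewrite exchange_big /=; apply: eq_bigr => j _.
under eq_bigr do rewrite mulr_suml.
rewrite exchange_big /= mulr_suml; apply: eq_bigr => i _.
rewrite (bigD1 (replace x j i)) //= eqxx big1 ?addr0; first by rewrite mulrAC.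
by move=> y /negbTE; rewrite eq_sym => ->; rewrite mul0r.
Qed.

Lemma trans_ge0 {R : realType} {N : nat} (w : 'I_N -> 'I_N -> R) (green : {set 'I_N}) (aG aR bG bR : R) x y :
  0 < aG -> 0 < aR -> 0 < bG -> 0 < bR -> (forall i j, 0 <= w i j) ->
  0 <= trans w green aG aR bG bR x y.
Proof.
move=> ha hb hc hd hw.
have hf j := fitness_gt0 green aG aR bG bR x j ha hb hc hd.
have hT : 0 <= total_fitness w green aG aR bG bR x.
  by apply: sumr_ge0 => j _; apply: sumr_ge0 => k _; rewrite mulr_ge0 // ltW.
apply: sumr_ge0 => j _; apply: sumr_ge0 => i _; case: ifP => // _.
by rewrite divr_ge0 // mulr_ge0 // ltW.
Qed.

Lemma trans_stoch {R : realType} {N : nat} (w : 'I_N -> 'I_N -> R) (green : {set 'I_N}) (aG aR bG bR : R) x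
   (g : state N -> R) :
  0 < total_fitness w green aG aR bG bR x ->
  (forall j i, g (replace x j i) = g x) ->
  \sum_y trans w green aG aR bG bR x y * g y = g x.
Proof.
move=> hT hg; rewrite trans_sum.
under eq_bigr do under eq_bigr do rewrite hg.
under eq_bigr do rewrite -mulr_suml.
rewrite -mulr_suml mulrAC divff ?mul1r //.
by rewrite gt_eqF.
Qed.

Lemma nstep_S {R : realType} {N : nat} (w : 'I_N -> 'I_N -> R) (green : {set 'I_N}) (aG aR bG bR : R) n x y :
  nstep w green aG aR bG bR n.+1 x y =
  \sum_z nstep w green aG aR bG bR n x z * trans w green aG aR bG bR z y.
Proof. by []. Qed.

Lemma nstep_ge0 {R : realType} {N : nat} (w : 'I_N -> 'I_N -> R) (green : {set 'I_N}) (aG aR bG bR : R) n x y :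
  0 < aG -> 0 < aR -> 0 < bG -> 0 < bR -> (forall i j, 0 <= w i j) ->
  0 <= nstep w green aG aR bG bR n x y.
Proof.
move=> ha hb hc hd hw; elim: n y => [|n IH] y /=; first by rewrite ler0n.
by apply: sumr_ge0 => z _; rewrite mulr_ge0 // trans_ge0.
Qed.

Lemma nstep_harm {R : realType} {N : nat} (w : 'I_N -> 'I_N -> R) (green : {set 'I_N}) (aG aR bG bR : R)
   (g : state N -> R) n x :
  (forall z, \sum_y trans w green aG aR bG bR z y * g y = g z) ->
  \sum_y nstep w green aG aR bG bR n x y * g y = g x.
Proof.
move=> hg; elim: n => [|n IH] /=.
  rewrite (bigD1 x) //= eqxx mul1r big1 ?addr0 // => y /negbTE.
  by rewrite eq_sym => ->; rewrite mul0r.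
under eq_bigr do rewrite mulr_suml.
rewrite exchange_big /= -{}IH; apply: eq_bigr => z _.
by rewrite -hg mulr_sumr; apply: eq_bigr => y _; rewrite mulrA.
Qed.

Lemma nstep_add {R : realType} {N : nat} (w : 'I_N -> 'I_N -> R) (green : {set 'I_N}) (aG aR bG bR : R) n m x y :
  nstep w green aG aR bG bR (n + m)%N x y =
  \sum_z nstep w green aG aR bG bR n x z * nstep w green aG aR bG bR m z y.
Proof.
elim: m y => [|m IH] y.
  rewrite addn0 /= (bigD1 y) //= eqxx mulr1 big1 ?addr0 // => z /negbTE ->.
  by rewrite mulr0.
rewrite addnS nstep_S.
under eq_bigr do rewrite IH mulr_suml.
rewrite exchange_big /=; apply: eq_bigr => z _.
by rewrite mulr_sumr; apply: eq_bigr => u _; rewrite mulrA.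
Qed.

Lemma nstep_absorb {R : realType} {N : nat} (w : 'I_N -> 'I_N -> R) (green : {set 'I_N}) (aG aR bG bR : R) n x y :
  0 < total_fitness w green aG aR bG bR x ->
  (forall j i, replace x j i = x) ->
  nstep w green aG aR bG bR n x y = (x == y)%:R.
Proof.
move=> hT hr; elim: n y => [|n IH] y //; rewrite nstep_S.
under eq_bigr do rewrite IH.
rewrite (bigD1 x) //= eqxx mul1r big1 ?addr0; last first.
  by move=> z /negbTE; rewrite eq_sym => ->; rewrite mul0r.
have := trans_stoch w green aG aR bG bR x (fun z => (z == y)%:R) hT (fun j i => congr1 _ (hr j i)).
rewrite (bigD1 y) //= eqxx mulr1 big1 ?addr0 //.
by move=> z /negbTE ->; rewrite mulr0.
Qed.
Lemma phi_replace {R : realType} {N : nat} (zeta : 'I_N -> R) (x : state N) j i :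
  (\prod_(k < N) zeta k ^+ (replace x j i k : nat)) * zeta i ^+ (x i : nat) =
  (\prod_(k < N) zeta k ^+ (x k : nat)) * zeta i ^+ (x j : nat).
Proof.
rewrite (bigD1 i) //= [X in _ = X * _](bigD1 i) //= /replace ffunE eqxx.
have -> : \prod_(k < N | k != i) zeta k ^+ ([ffun k0 => if k0 == i then x j else x k0] k : nat)
  = \prod_(k < N | k != i) zeta k ^+ (x k : nat).
  by apply: eq_bigr => k /negbTE hk; rewrite ffunE hk.
by ring.
Qed.

Lemma replace_same {N : nat} (x : state N) j i : x j = x i -> replace x j i = x.
Proof.
by move=> h; apply/ffunP => k; rewrite ffunE; case: eqP => // ->.
Qed.

Lemma sum_antisym {R : realType} {N : nat} (D : 'I_N -> 'I_N -> R) :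
  (forall j i, D j i + D i j = 0) -> \sum_j \sum_i D j i = 0.
Proof.
move=> h.
have e : \sum_j \sum_i D j i = \sum_j \sum_i D i j by rewrite exchange_big.
have : \sum_j \sum_i D j i + \sum_j \sum_i D j i = 0.
  rewrite {2}e -big_split /= big1 // => j _.
  by rewrite -big_split /= big1 // => i _.
move=> hs; move: (\sum_j \sum_i D j i) hs => S hs; lra.
Qed.
Lemma pair_zero {R : realType} {N : nat} (w : 'I_N -> 'I_N -> R) (green : {set 'I_N})
   (aG aR bG bR c zG zR : R) (zeta : 'I_N -> R) (x : state N) g r :
  (forall k, zeta k = if k \in green then zG else zR) ->
  zG != 0 -> zR != 0 ->
  zG * aG * (zR - 1) + bR * c * (1 - zG) = 0 ->
  zR * aR * c * (zG - 1) + bG * (1 - zR) = 0 ->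
  g \in green -> r \notin green -> w r g = c * w g r ->
  let phi := fun y : state N => \prod_(k < N) zeta k ^+ (y k : nat) in
  fitness green aG aR bG bR x g * w g r * (phi (replace x g r) - phi x) +
  fitness green aG aR bG bR x r * w r g * (phi (replace x r g) - phi x) = 0.
Proof.
move=> hz hG hR I1 I2 hg hr hw phi.
have h1 := phi_replace zeta x g r.
have h2 := phi_replace zeta x r g.
rewrite !hz hg (negbTE hr) in h1 h2.
rewrite /fitness hg (negbTE hr) hw.
rewrite -/(phi _) -/(phi x) -/(phi (replace x r g)) in h1 h2.
case Eg: (x g); case Er: (x r); rewrite ?Eg ?Er /= in h1 h2 *.
- by rewrite !replace_same ?Eg ?Er // !subrr !mulr0 addr0.
- rewrite expr0 mulr1 expr1 in h1; rewrite expr1 expr0 mulr1 in h2.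
  have -> : phi (replace x r g) = phi x / zG.
    by rewrite -h2 mulfK.
  rewrite h1.
  have -> : aG * w g r * (phi x * zR - phi x) + bR * (c * w g r) * (phi x / zG - phi x)
     = phi x * w g r / zG * (zG * aG * (zR - 1) + bR * c * (1 - zG)) by field.
  by rewrite I1 mulr0.
- rewrite expr1 expr0 mulr1 in h1; rewrite expr0 mulr1 expr1 in h2.
  have -> : phi (replace x g r) = phi x / zR.
    by rewrite -h1 mulfK.
  rewrite h2.
  have -> : bG * w g r * (phi x / zR - phi x) + aR * (c * w g r) * (phi x * zG - phi x)
     = phi x * w g r / zR * (zR * aR * c * (zG - 1) + bG * (1 - zR)) by field.
  by rewrite I2 mulr0.
- by rewrite !replace_same ?Eg ?Er // !subrr !mulr0 addr0.
Qed.
Lemma mart_step {R : realType} {N : nat} (w : 'I_N -> 'I_N -> R) (green : {set 'I_N})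
   (aG aR bG bR c zG zR : R) (zeta : 'I_N -> R) (x : state N) :
  (forall k, zeta k = if k \in green then zG else zR) ->
  zG != 0 -> zR != 0 ->
  zG * aG * (zR - 1) + bR * c * (1 - zG) = 0 ->
  zR * aR * c * (zG - 1) + bG * (1 - zR) = 0 ->
  (forall i j, (i \in green) = (j \in green) -> w i j = 0) ->
  (forall i j, i \in green -> j \notin green -> w j i = c * w i j) ->
  0 < total_fitness w green aG aR bG bR x ->
  let phi := fun y : state N => \prod_(k < N) zeta k ^+ (y k : nat) in
  \sum_y trans w green aG aR bG bR x y * phi y = phi x.
Proof.
move=> hz hG hR I1 I2 hsame hc hT phi.
rewrite trans_sum.
apply/(canLR (mulfK _)); first by rewrite gt_eqF.
apply/eqP; rewrite -subr_eq0 /total_fitness mulr_sumr -sumrB; apply/eqP.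
under eq_bigr do rewrite mulr_sumr -sumrB.
under eq_bigr do under eq_bigr do rewrite [phi x * _]mulrC -mulrBr.
apply: sum_antisym => j i.
case Ej: (j \in green); case Ei: (i \in green).
- by rewrite !hsame ?Ej ?Ei // !(mulr0, mul0r) addr0.
- exact: (@pair_zero _ _ w green aG aR bG bR c zG zR zeta x j i hz hG hR I1 I2 Ej (negbT Ei) (hc _ _ Ej (negbT Ei))).
- rewrite addrC.
  exact: (@pair_zero _ _ w green aG aR bG bR c zG zR zeta x i j hz hG hR I1 I2 Ei (negbT Ej) (hc _ _ Ei (negbT Ej))).
- by rewrite !hsame ?Ej ?Ei // !(mulr0, mul0r) addr0.
Qed.
Definition all_zeros (N : nat) : state N := [ffun => false].

Lemma path_edge {T : finType} (e : rel T) (P : pred T) x y :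
  connect e x y -> P x -> ~~ P y -> exists u v, [/\ e u v, P u & ~~ P v].
Proof.
move/connectP=> [p]; elim: p x => [|z p IH] x /=.
  by move=> _ -> ->.
move=> /andP[exz pz] ly Px nPy.
case Pz: (P z); first exact: (IH z pz ly Pz nPy).
by exists x, z; rewrite exz Px Pz.
Qed.

Lemma trans_ge_term {R : realType} {N : nat} (w : 'I_N -> 'I_N -> R) (green : {set 'I_N})
   (aG aR bG bR : R) x j i :
  0 < aG -> 0 < aR -> 0 < bG -> 0 < bR -> (forall i j, 0 <= w i j) ->
  fitness green aG aR bG bR x j * w j i / total_fitness w green aG aR bG bR x
   <= trans w green aG aR bG bR x (replace x j i).
Proof.
move=> ha hb hc hd hw.
have hf j' := fitness_gt0 green aG aR bG bR x j' ha hb hc hd.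
have hT : 0 <= total_fitness w green aG aR bG bR x.
  by apply: sumr_ge0 => j' _; apply: sumr_ge0 => k _; rewrite mulr_ge0 // ltW.
have hnn : forall j' i', 0 <= (if replace x j' i' == replace x j i then
   fitness green aG aR bG bR x j' * w j' i' / total_fitness w green aG aR bG bR x else 0).
  by move=> j' i'; case: ifP => // _; rewrite divr_ge0 // mulr_ge0 // ltW.
rewrite /trans; apply: le_trans (sum_ge_term _ j _); last first.
  by move=> j'; apply: sumr_ge0.
by apply: le_trans (sum_ge_term _ i _) => //; rewrite eqxx.
Qed.

Lemma reach_ones {R : realType} {N : nat} (w : 'I_N -> 'I_N -> R) (green : {set 'I_N})
   (aG aR bG bR : R) :
  0 < aG -> 0 < aR -> 0 < bG -> 0 < bR -> (forall i j, 0 <= w i j) ->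
  (forall i j, connect [rel k l | 0 < w k l] i j) ->
  (forall x, 0 < total_fitness w green aG aR bG bR x) ->
  forall k x, x != all_zeros N -> (#|[set i | ~~ x i]| <= k)%N ->
    0 < nstep w green aG aR bG bR k x (all_ones N).
Proof.
move=> ha hb hc hd hw hcon hT.
have habs n : nstep w green aG aR bG bR n (all_ones N) (all_ones N) = 1.
  by rewrite nstep_absorb // ?eqxx // => j i; apply/ffunP => k; rewrite !ffunE; case: ifP.
elim=> [|k IH] x hx hk.
  have -> : x = all_ones N.
    apply/ffunP => i; rewrite ffunE; apply/negPn/negP => hi.
    have : i \in [set i | ~~ x i] by rewrite inE.
    by move=> hS; move: hk; rewrite leqn0 => /eqP/card0_eq/(_ i); rewrite hS.
  by rewrite /= eqxx ltr01.
have [-> | hx1] := eqVneq x (all_ones N); first by rewrite habs ltr01.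
have [j0 hj0] : exists j, x j.
  apply/existsP; move: hx; apply: contraNT; rewrite negb_exists => /forallP h.
  by apply/eqP/ffunP => i; rewrite ffunE; apply/negbTE.
have [i0 hi0] : exists i, ~~ x i.
  apply/existsP; move: hx1; apply: contraNT; rewrite negb_exists => /forallP h.
  by apply/eqP/ffunP => i; rewrite ffunE; apply/negbNE.
have [j [i [/= wji xj xi]]] := @path_edge _ _ (fun i => x i) _ _ (hcon j0 i0) hj0 hi0.
set y := replace x j i.
have yi : y i = x j by rewrite /y /replace ffunE eqxx.
have hy : y != all_zeros N by apply/eqP => /ffunP /(_ i); rewrite yi ffunE xj.
have hyk : (#|[set l | ~~ y l]| <= k)%N.
  have e : [set l | ~~ y l] = [set l | ~~ x l] :\ i.
    apply/setP => l; rewrite !inE /y /replace ffunE.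
    by case: eqP => [->|]; rewrite ?xj ?xi.
  by move: hk; rewrite (cardsD1 i [set l | ~~ x l]) inE xi e.
change (0 < nstep w green aG aR bG bR (1 + k)%N x (all_ones N)).
rewrite nstep_add.
apply: (lt_le_trans _ (sum_ge_term _ y _)); last first.
  by move=> z; rewrite mulr_ge0 // nstep_ge0.
apply: mulr_gt0; last exact: IH.
have -> : nstep w green aG aR bG bR 1 x y = trans w green aG aR bG bR x y.
  rewrite /= (bigD1 x) //= eqxx mul1r big1 ?addr0 // => z /negbTE.
  by rewrite eq_sym => ->; rewrite mul0r.
apply: (lt_le_trans _ (trans_ge_term _ _ _ _ _ _ _ _ _ ha hb hc hd hw)).
by rewrite divr_gt0 // mulr_gt0 // fitness_gt0.
Qed.
Lemma finite_lb {R : realType} {S : finType} (F : S -> R) :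
  (forall y, 0 < F y) -> exists2 d, 0 < d & forall y, d <= F y.
Proof.
move=> hF.
suff [d d0 hd] : exists2 d, 0 < d & forall y, y \in enum S -> d <= F y.
  by exists d => // y; apply: hd; rewrite mem_enum.
elim: (enum S) => [|a s [d d0 hd]]; first by exists 1.
exists (Num.min d (F a)); first by rewrite lt_min d0 hF.
move=> y; rewrite inE => /orP[/eqP ->|ys]; first by rewrite ge_min lexx orbT.
by rewrite ge_min hd.
Qed.

Lemma geom_small {R : realType} (z e : R) : 0 <= z -> z < 1 -> 0 < e -> exists k : nat, z ^+ k < e.
Proof.
move=> z0 z1 e0.
have := @cvg_expr R z.
rewrite ger0_norm // => /(_ z1).
move/cvgrPdist_lt => /(_ e e0).
move=> [k _ hk].
exists k; have := hk k (leqnn k); rewrite /= sub0r normrN ger0_norm //.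
exact: exprn_ge0.
Qed.


Lemma transient_decay {R : realType} {S : finType} (Pn : nat -> S -> S -> R) (a b : S) (M : nat) :
  (forall n x y, 0 <= Pn n x y) ->
  (forall n x, \sum_y Pn n x y = 1) ->
  (forall n m x y, Pn (n + m)%N x y = \sum_z Pn n x z * Pn m z y) ->
  (forall n y, Pn n a y = (a == y)%:R) ->
  (forall n y, Pn n b y = (b == y)%:R) ->
  (forall x, x != a -> x != b -> 0 < Pn M x a) ->
  forall e, 0 < e -> exists n0, forall n, (n0 <= n)%N -> forall x,
     \sum_(y | (y != a) && (y != b)) Pn n x y < e.
Proof.
move=> hge0 hsum hCK ha hb hreach e e0.
pose tr y := (y != a) && (y != b).
pose tm n x := \sum_(y | tr y) Pn n x y.
have tm_ge0 n x : 0 <= tm n x by apply: sumr_ge0.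
have tm_le1 n x : tm n x <= 1.
  rewrite -(hsum n x) [X in _ <= X](bigID tr) /= lerDl.
  by apply: sumr_ge0.
have tm_abs n y : ~~ tr y -> tm n y = 0.
  rewrite /tr negb_and !negbK => /orP[] /eqP ->; apply: big1 => z /andP[za zb].
    by rewrite ha eq_sym (negbTE za).
  by rewrite hb eq_sym (negbTE zb).
have tm_CK n m x : tm (n + m)%N x = \sum_(y | tr y) Pn n x y * tm m y.
  rewrite /tm.
  under eq_bigr do rewrite hCK.
  rewrite exchange_big /= [RHS]big_mkcond /=; apply: eq_bigr => y _.
  rewrite -mulr_sumr; case: ifP => // /negbT /(tm_abs m) .
  by rewrite /tm => ->; rewrite mulr0.
have tm_mono n m x : tm (n + m)%N x <= tm n x.
  rewrite tm_CK; apply: ler_sum => y _.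
  by rewrite -[X in _ <= X]mulr1 ler_wpM2l.
pose F y := if tr y then Pn M y a else 1.
have [d d0 hd] : exists2 d, 0 < d & forall y, d <= F y.
  by apply: finite_lb => y; rewrite /F; case: ifP => [/andP[]|] //; exact: hreach.
have tmM y : tr y -> tm M y <= 1 - d.
  move=> hy; have := hd y; rewrite /F hy => hdy.
  suff : tm M y + Pn M y a <= 1 by move=> h; rewrite lerBrDr; apply: le_trans h; rewrite lerD2l.
  rewrite -(hsum M y) [X in _ <= X](bigID tr) /= lerD2l big_mkcond /=.
  apply: (le_trans _ (sum_ge_term _ a _)); first by rewrite /tr eqxx.
  by move=> z; case: ifP.
have d1 : d <= 1.
  have [x|] := pickP tr.
    move=> hx; have := hd x; rewrite /F hx => h; apply: le_trans h _.
    rewrite -(hsum M x); apply: (sum_ge_term _ a) => z; exact: hge0.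
  move=> _; have := hd a; by rewrite /F /tr eqxx.
have tmk k x : tm (k * M)%N x <= (1 - d) ^+ k.
  elim: k x => [|k IH] x; first by rewrite mul0n expr0.
  rewrite mulSn addnC tm_CK exprS.
  apply: le_trans (_ : \sum_(y | tr y) Pn (k * M)%N x y * (1 - d) <= _).
    by apply: ler_sum => y hy; rewrite ler_wpM2l // tmM.
  by rewrite -mulr_suml mulrC ler_wpM2l // ?subr_ge0 // IH.
have z0 : 0 <= 1 - d by rewrite subr_ge0.
have z1 : 1 - d < 1 by rewrite ltrBlDr ltrDl.
have [k hk] := geom_small (1 - d) e z0 z1 e0.
exists (k * M)%N => n hn x.
change (tm n x < e); rewrite -(subnKC hn).
exact: le_lt_trans (tm_mono _ _ x) (le_lt_trans (tmk k x) hk).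
Qed.
Lemma sum_pos_ex {R : realType} {I : finType} (F : I -> R) :
  (forall j, 0 <= F j) -> 0 < \sum_j F j -> exists j, 0 < F j.
Proof.
move=> h0 hs; have [j hj|hn] := pickP (fun j => 0 < F j); first by exists j.
suff : \sum_j F j <= \sum_(j : I) (0 : R) by rewrite big1_eq leNgt hs.
by apply: ler_sum => j _; rewrite leNgt hn.
Qed.

Lemma zeta_ids {R : realType} (winG woutG winR woutR aG aR bG bR : R) :
  0 < winG -> 0 < woutG -> 0 < winR -> 0 < woutR ->
  0 < aG -> 0 < aR -> 0 < bG -> 0 < bR ->
  woutR = winG / woutG * winR ->
  let zG := (bR * winG * (aR * woutR + bG * winR)) /
            (aR * woutR * (aG * woutG + bR * winG)) in
  let zR := (bG * winR * (aG * woutG + bR * winG)) /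
            (aG * woutG * (aR * woutR + bG * winR)) in
  let c := winG / woutG in
  [/\ 0 < zG, 0 < zR,
      zG * aG * (zR - 1) + bR * c * (1 - zG) = 0 &
      zR * aR * c * (zG - 1) + bG * (1 - zR) = 0].
Proof.
move=> p1 p2 p3 p4 p5 p6 p7 p8 hw zG zR c.
have u0 : 0 < aR * woutR + bG * winR by rewrite addr_gt0 // mulr_gt0.
have v0 : 0 < aG * woutG + bR * winG by rewrite addr_gt0 // mulr_gt0.
split.
- by rewrite divr_gt0 // !mulr_gt0.
- by rewrite divr_gt0 // !mulr_gt0.
- rewrite /zG /zR /c; field.
  by rewrite !gt_eqF.
- rewrite /zG /zR /c; move: u0; rewrite hw => u0; field.
  by rewrite !gt_eqF // addr_gt0 // !mulr_gt0.
Qed.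
Lemma prod_zeta {R : realType} {N : nat} (green : {set 'I_N}) (zG zR : R) :
  \prod_(i < N) (if i \in green then zG else zR) = zG ^+ #|green| * zR ^+ #|~: green|.
Proof.
rewrite (bigID (fun i => i \in green)) /=; congr (_ * _).
  by rewrite -prodr_const; apply: eq_bigr => i ->.
rewrite -prodr_const; apply: eq_big => [i|i /negbTE ->] //; by rewrite inE.
Qed.

Lemma sum_zeta {R : realType} {N : nat} (green : {set 'I_N}) (zG zR : R) :
  \sum_(i < N) (if i \in green then zG else zR) = #|green|%:R * zG + #|~: green|%:R * zR.
Proof.
rewrite (bigID (fun i => i \in green)) /= !mulr_natl; congr (_ + _).
  by rewrite -sumr_const; apply: eq_bigr => i ->.
rewrite -sumr_const; apply: eq_big => [i|i /negbTE ->] //; by rewrite inE.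
Qed.

Lemma phi_single {R : realType} {N : nat} (zeta : 'I_N -> R) i :
  \prod_(k < N) zeta k ^+ (single_A i k : nat) = zeta i.
Proof.
rewrite (bigD1 i) //= /single_A ffunE eqxx expr1 big1 ?mulr1 //.
by move=> k /negbTE hk; rewrite ffunE hk expr0.
Qed.

Lemma phi_ones {R : realType} {N : nat} (zeta : 'I_N -> R) :
  \prod_(k < N) zeta k ^+ (all_ones N k : nat) = \prod_(k < N) zeta k.
Proof. by apply: eq_bigr => k _; rewrite ffunE expr1. Qed.

Lemma phi_zeros {R : realType} {N : nat} (zeta : 'I_N -> R) :
  \prod_(k < N) zeta k ^+ (all_zeros N k : nat) = 1.
Proof. by rewrite big1 // => k _; rewrite ffunE expr0. Qed.
Lemma fix_conv {R : realType} {S : finType} (Pn : nat -> S -> S -> R) (a b : S)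
    (phi : S -> R) (Z : R) :
  (forall n x y, 0 <= Pn n x y) ->
  (forall n x, \sum_y Pn n x y = 1) ->
  (forall n x, \sum_y Pn n x y * phi y = phi x) ->
  phi a = Z -> phi b = 1 -> a != b -> Z != 1 ->
  (forall e, 0 < e -> exists n0, forall n, (n0 <= n)%N -> forall x,
     \sum_(y | (y != a) && (y != b)) Pn n x y < e) ->
  forall e, 0 < e -> exists n0, forall n, (n0 <= n)%N -> forall x,
     `|(1 - phi x) / (1 - Z) - Pn n x a| < e.
Proof.
move=> hge0 hsum hmart ha hb hab hZ hdec e e0.
pose tr y := (y != a) && (y != b).
pose C := \sum_y `|phi y|.
have C0 : 0 <= C by apply: sumr_ge0.
have hZ' : 1 - Z != 0 by rewrite subr_eq0 eq_sym.
have nZ : 0 < `|1 - Z| by rewrite normr_gt0.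
pose K := (1 + C) / `|1 - Z|.
have K0 : 0 < K by rewrite divr_gt0 // ltr_pwDl.
have split3 (F : S -> R) : \sum_y F y = F a + F b + \sum_(y | tr y) F y.
  by rewrite (bigD1 a) //= (bigD1 b) 1?eq_sym //= addrA.
have bound n x : `|(1 - phi x) / (1 - Z) - Pn n x a| <= K * \sum_(y | tr y) Pn n x y.
  set t := \sum_(y | tr y) Pn n x y.
  set s := \sum_(y | tr y) Pn n x y * phi y.
  have h1 := hsum n x; have h2 := hmart n x.
  rewrite split3 -/t in h1; rewrite split3 -/s ha hb mulr1 in h2.
  have hs : `|s| <= C * t.
    apply: le_trans (ler_norm_sum _ _ _) _.
    rewrite /C; apply: le_trans (_ : \sum_(y | tr y) t * `|phi y| <= _).
      apply: ler_sum => y hy; rewrite normrM ger0_norm // ler_wpM2r //.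
      by rewrite /t (bigD1 y) //= lerDl sumr_ge0.
    rewrite -mulr_sumr mulrC ler_wpM2r // ?sumr_ge0 //.
      by rewrite [X in _ <= X](bigID tr) /= lerDl sumr_ge0.
  have t0 : 0 <= t by rewrite /t sumr_ge0.
  have -> : (1 - phi x) / (1 - Z) - Pn n x a = (t - s) / (1 - Z).
    have e1 : 1 - phi x - Pn n x a * (1 - Z) = t - s.
      rewrite -h2; have -> : t = 1 - Pn n x a - Pn n x b by rewrite -h1; ring.
      ring.
    by apply: (mulIf hZ'); rewrite mulfVK // mulrBl mulfVK // e1.
  rewrite normrM normfV /K mulrAC ler_pM2r ?invr_gt0 //.
  apply: le_trans (ler_normB _ _) _.
  by rewrite ger0_norm // mulrDl mul1r lerD2l.
have [n0 hn0] := hdec (e / K) (divr_gt0 e0 K0).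
exists n0 => n hn x.
apply: le_lt_trans (bound n x) _.
by rewrite -ltr_pdivlMl // mulrC hn0.
Qed.
Local Open Scope classical_set_scope.
Local Open Scope ring_scope.

Theorem mainTheorem3 (R : realType) (N : nat) (w : 'I_N -> 'I_N -> R)
    (green : {set 'I_N})
    (winG woutG winR woutR aG aR bG bR : R) :
  (0 < N)%N ->
  (forall i j, 0 <= w i j) ->
  (forall i, w i i = 0) ->
  (forall i j, connect [rel k l | 0 < w k l] i j) ->
  (forall i j, (i \in green) = (j \in green) -> w i j = 0) ->
  0 < winG -> 0 < woutG -> 0 < winR -> 0 < woutR ->
  (forall i, i \in green ->
     \sum_(j < N) w j i = winG /\ \sum_(j < N) w i j = woutG) ->
  (forall i, i \notin green ->
     \sum_(j < N) w j i = winR /\ \sum_(j < N) w i j = woutR) ->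
  (forall i j, i \in green -> j \notin green -> w j i = winG / woutG * w i j) ->
  0 < aG -> 0 < aR -> 0 < bG -> 0 < bR ->
  let zG := (bR * winG * (aR * woutR + bG * winR)) /
            (aR * woutR * (aG * woutG + bR * winG)) in
  let zR := (bG * winR * (aG * woutG + bR * winG)) /
            (aG * woutG * (aR * woutR + bG * winR)) in
  let zeta := fun i : 'I_N => if i \in green then zG else zR in
  let phi := fun x : state N => \prod_(i < N) zeta i ^+ (x i : nat) in
  let NG := #|green| in
  let NR := #|~: green| in
  let P := trans w green aG aR bG bR in
  let Pn := nstep w green aG aR bG bR in
  (* martingale property of prod_i zeta_i^{X_n(i)} *)
  (forall x : state N, \sum_(y : state N) P x y * phi y = phi x) /\
  (zG ^+ NG * zR ^+ NR != 1 ->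
     (* fixation probability of A from x *)
     (forall x : state N,
        (fun n : nat => Pn n x (all_ones N)) @ \oo -->
          (1 - phi x) / (1 - zG ^+ NG * zR ^+ NR)) /\
     (* mean fixation probability of a single A at a uniformly random vertex *)
     (fun n : nat => (N%:R)^-1 * \sum_(i < N) Pn n (single_A i) (all_ones N))
        @ \oo -->
          (1 - (N%:R)^-1 * (NG%:R * zG + NR%:R * zR)) /
          (1 - zG ^+ NG * zR ^+ NR)).
Proof.
move=> hN hw hdiag hcon hsame hwinG hwoutG hwinR hwoutR hdG hdR hc haG haR hbG hbR
  zG zR zeta phi NG NR P Pn.
pose i0 : 'I_N := Ordinal hN.
have [j0 [hj0 hcol]] : exists j, 0 < w j i0 /\ (j \in green) != (i0 \in green).
  have hin : 0 < \sum_j w j i0.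
    by case: (boolP (i0 \in green)) => h; [rewrite (hdG _ h).1 | rewrite (hdR _ h).1].
  have [j hj] := sum_pos_ex (fun j => w j i0) (fun j => hw j i0) hin.
  exists j; split => //; apply/negP => /eqP /hsame e.
  by move: hj; rewrite e ltxx.
have hT x : 0 < total_fitness w green aG aR bG bR x.
  exact: (total_gt0 w green aG aR bG bR x j0 i0 haG haR hbG hbR hw hj0).
have [r hr] : exists r, r \notin green.
  by case: (boolP (i0 \in green)) => h; [exists j0; move: hcol; rewrite h; case: (j0 \in green) | exists i0].
have hwR : woutR = winG / woutG * winR.
  rewrite -(hdR _ hr).1 -(hdR _ hr).2 mulr_sumr; apply: eq_bigr => k _.
  case: (boolP (k \in green)) => hk; first by rewrite (hc _ _ hk hr).
  by rewrite !hsame ?mulr0 // (negbTE hk) (negbTE hr).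
have [zG0 zR0 I1 I2] := zeta_ids winG woutG winR woutR aG aR bG bR hwinG hwoutG hwinR hwoutR haG haR hbG hbR hwR.
rewrite -/zG -/zR in zG0 zR0 I1 I2.
have hz k : zeta k = if k \in green then zG else zR by [].
have hmart x : \sum_y P x y * phi y = phi x.
  exact: (mart_step w green aG aR bG bR (winG / woutG) zG zR zeta x hz (negbT (gt_eqF zG0)) (negbT (gt_eqF zR0)) I1 I2 hsame hc (hT x)).
split => // hZ.
set Z := zG ^+ NG * zR ^+ NR in hZ *.
have phi1 : phi (all_ones N) = Z.
  by rewrite /phi phi_ones /zeta prod_zeta.
have phi0 : phi (all_zeros N) = 1 by rewrite /phi phi_zeros.
have h10 : all_ones N != all_zeros N.
  by apply/eqP => /ffunP /(_ i0); rewrite !ffunE.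
have hge0 n x y : 0 <= Pn n x y by apply: nstep_ge0.
have hsum n x : \sum_y Pn n x y = 1.
  have := nstep_harm w green aG aR bG bR (fun _ => 1) n x
    (fun z => trans_stoch w green aG aR bG bR z (fun _ => 1) (hT z) (fun _ _ => erefl)).
  by under eq_bigr do rewrite mulr1.
have hmartn n x : \sum_y Pn n x y * phi y = phi x.
  exact: (nstep_harm w green aG aR bG bR phi n x hmart).
have hCK n m x y : Pn (n + m)%N x y = \sum_z Pn n x z * Pn m z y by apply: nstep_add.
have ha n y : Pn n (all_ones N) y = (all_ones N == y)%:R.
  apply: nstep_absorb => // j i; apply/ffunP => k; rewrite !ffunE; by case: ifP.
have hb n y : Pn n (all_zeros N) y = (all_zeros N == y)%:R.
  apply: nstep_absorb => // j i; apply/ffunP => k; rewrite !ffunE; by case: ifP.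
have hreach x : x != all_ones N -> x != all_zeros N -> 0 < Pn N x (all_ones N).
  move=> _ hx; apply: (reach_ones w green aG aR bG bR haG haR hbG hbR hw hcon hT) => //.
  by apply: leq_trans (max_card _) _; rewrite card_ord.
have decay := transient_decay Pn (all_ones N) (all_zeros N) N hge0 hsum hCK ha hb hreach.
have key := fix_conv Pn (all_ones N) (all_zeros N) phi Z hge0 hsum hmartn phi1 phi0 h10 hZ decay.
split.
  move=> x; apply/cvgrPdist_lt => e e0; have [n0 hn0] := key e e0.
  by exists n0 => // n /= hn; apply: hn0.
have hL : (1 - N%:R^-1 * (NG%:R * zG + NR%:R * zR)) / (1 - Z) =
    N%:R^-1 * \sum_(i < N) (1 - phi (single_A i)) / (1 - Z).
  have hN0 : (N%:R : R) != 0 by rewrite pnatr_eq0 -lt0n.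
  rewrite -mulr_suml sumrB sumr_const card_ord.
  under eq_bigr do rewrite /phi phi_single /zeta.
  rewrite sum_zeta -/NG -/NR.
  field.
  by rewrite hN0 subr_eq0 eq_sym hZ.
rewrite hL.
apply/cvgrPdist_lt => e e0.
have [n0 hn0] := key (e / 2) (divr_gt0 e0 (ltr0Sn _ 1)).
exists n0 => // n /= hn.
have hNp : (0 : R) < N%:R by rewrite ltr0n.
rewrite -mulrBr normrM ger0_norm ?invr_ge0 ?ler0n // -sumrB.
apply: le_lt_trans (_ : N%:R^-1 * (N%:R * (e / 2)) < e).
  rewrite ler_wpM2l ?invr_ge0 ?ler0n //.
  apply: le_trans (ler_norm_sum _ _ _) _.
  apply: le_trans (_ : \sum_(i < N) e / 2 <= _).
    by apply: ler_sum => i _; apply: ltW; apply: hn0.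
  by rewrite sumr_const card_ord mulr_natl.
rewrite mulKf ?gt_eqF //; lra.
Qed.
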